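(* Let $n\ge 7$, $\zeta_n=e^{2\pi i/n}$, $K=\mathbb{Q}(\zeta_n)$, and let $J=\{j_1<\dots<j_k\}\subseteq\{0,1,\dots,n-1\}$ with $k\ge 3$ and $j_k\le (n-1)/2$, such that the elements of $J$ do not form an arithmetic progression. Let $G$ be the $k\times n$ matrix over $K$ with $G_{i,l}=\zeta_n^{j_i(l-1)}$, and assume all $k\times k$ submatrices of $G$ have non-zero determinant in $K$. Let $P_{\mathrm{bad}}$ be the set of rational primes dividing $|N_{K/\mathbb{Q}}(\Delta)|$ for some such determinant $\Delta$. Let $p\notin P_{\mathrm{bad}}$ be a prime with $p\nmid n$, $\mathfrak{p}$ a prime ideal of $\mathbb{Z}[\zeta_n]$ above $p$, $\mathbb{F}_q\cong\mathbb{Z}[\zeta_n]/\mathfrak{p}$ ($q=p^f$, $f$ the multiplicative order of $p$ mod $n$), and $\overline{\mathcal{C}}$ the code over $\mathbb{F}_q$ generated by the reduction of $G$ modulo $\mathfrak{p}$. Then $\overline{\mathcal{C}}$ (a cyclic $[n,k]$ MDS code) is of non-RS type.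
   Context: A (generalized) Reed–Solomon code over a field $F$ has a generator matrix $(v_j x_j^{i-1})_{1\le i\le k,1\le j\le n}$ with distinct $x_j\in F$ and $v_j\in F^\times$; a code is of RS type if it is equivalent to such a code (by change of generator matrix, column permutation and non-zero column scaling), and of non-RS type otherwise. $N_{K/\mathbb{Q}}$ is the field norm. *)

(* Defs.v *)
From HB Require Import structures.
From mathcomp Require Import all_boot all_order all_algebra all_fingroup all_field.
Set Implicit Arguments. Unset Strict Implicit. Unset Printing Implicit Defensive.
Import Order.TTheory GRing.Theory Num.Theory.
Local Open Scope ring_scope.

(* The k x n matrix (w^(j_i * l))_{i<k, l<n}  (0-based column index l = l'-1). *)
Definition cycmx (R : comNzRingType) (k n : nat) (j : 'I_k -> nat) (w : R)
  : 'M[R]_(k, n) := \matrix_(i < k, l < n) w ^+ (j i * l).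

Definition cycminor (R : comNzRingType) (k n : nat) (j : 'I_k -> nat) (w : R)
  (s : 'I_k -> 'I_n) : R := \det (colsub s (cycmx n j w)).

(* N_{K/Q} of the minor Delta(s) = det(colsub s G) with G = cycmx n j z,
   K = Q(z), z a primitive n-th root of unity: the product of the Galois
   conjugates sigma_m(Delta), sigma_m : z |-> z^m, m in (Z/n)^*.          *)
Definition normminor (k n : nat) (j : 'I_k -> nat) (z : algC)
  (s : 'I_k -> 'I_n) : algC :=
  \prod_(m < n | coprime m n) cycminor j (z ^+ m) s.

Definition GRSmx (F : fieldType) (k n : nat) (x v : 'I_n -> F) : 'M[F]_(k, n) :=
  \matrix_(i < k, l < n) (v l * x l ^+ i).

(* The code generated by A (its row space) is of RS type: it is equivalent,
   by change of generator matrix (same row space), column permutation and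
   non-zero column scaling, to a generalized RS code. *)
Definition RS_type (F : fieldType) (k n : nat) (A : 'M[F]_(k, n)) : Prop :=
  exists (x v u : 'I_n -> F) (sg : 'S_n),
    injective x /\ (forall l, v l != 0) /\ (forall l, u l != 0) /\
    (A == col_perm sg (GRSmx k x v) *m diag_mx (\row_l u l))%MS.

(* Main.v *)
Require Import Defs.
From HB Require Import structures.
From mathcomp Require Import all_boot all_order all_algebra all_fingroup all_field.
From mathcomp Require Import ring lra zify.
From Stdlib Require Import Classical_Pred_Type.
Import Order.TTheory GRing.Theory Num.Theory.

Lemma comb (k : nat) (j : 'I_k -> nat) :
  (0 < k)%N ->
  (forall a b : 'I_k, (a < b)%N -> (j a < j b)%N) ->
  ~ (exists a d : nat, forall i : 'I_k, j i = (a + i * d)%N) ->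
  exists L : seq nat, [/\ uniq L, size L = (2 * k)%N &
    forall t, (t < size L)%N -> exists a b : 'I_k, nth 0%N L t = (j a + j b)%N].
Proof.
move=> k0 jinc nAP.
pose i0 : 'I_k := Ordinal k0.
pose jn i := j (insubd i0 i).
have vK : forall i, (i < k)%N -> val (insubd i0 i) = i.
  by move=> i ik; rewrite insubdK.
have jnE : forall i : 'I_k, jn i = j i.
  by move=> i; congr j; apply: val_inj; rewrite vK.
have jninc : forall u v, (u < v)%N -> (v < k)%N -> (jn u < jn v)%N.
  by move=> u v uv vk; apply: jinc; rewrite !vK //; lia.
have [i [ik ne]] : exists i, (i.+2 < k)%N /\ (jn i + jn i.+2 != jn i.+1 + jn i.+1)%N.
  apply/not_all_not_ex => H; apply: nAP.
  have eqs : forall i, (i.+2 < k)%N -> (jn i + jn i.+2 = jn i.+1 + jn i.+1)%N.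
    move=> i ik; apply/eqP; case: eqP => // hne; exfalso.
    by apply: (H i); split => //; apply/eqP.
  exists (jn 0), (jn 1 - jn 0)%N.
  have Q : forall i, (i.+1 < k)%N -> jn i = (jn 0 + i * (jn 1 - jn 0))%N /\
                                   jn i.+1 = (jn 0 + i.+1 * (jn 1 - jn 0))%N.
    elim=> [k1|i IH ik].
      by have := jninc 0 1 isT k1; split; lia.
    have [h1 h2] := IH (ltnW ik); have := eqs i ik; split; first by [].
    nia.
  case=> [[|i'] ik] /=; rewrite -jnE /=; first lia.
  by have [_ ->] := Q i' ik.
pose c t := (jn (t %/ 2) + jn (t.+1 %/ 2))%N.
pose m := (2 * k).-1.
have cS : forall t, (t.+1 < m)%N -> (c t < c t.+1)%N.
  move=> t tm; rewrite /c.
  have [[-> ->]|[-> ->]] : (t.+1 %/ 2 = t %/ 2 /\ t.+2 %/ 2 = (t %/ 2).+1) \/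
    (t.+1 %/ 2 = (t %/ 2).+1 /\ t.+2 %/ 2 = (t %/ 2).+1) by lia.
  - by rewrite ltn_add2l; apply: jninc => //; lia.
  - by rewrite ltn_add2r; apply: jninc => //; lia.
have cmono : {in [pred t | (t < m)%N] &, {homo c : t1 t2 / (t1 < t2)%N}}.
  apply: homo_ltn_in.
  - by move=> y x z; apply: ltn_trans.
  - move=> a b d; rewrite !inE /= => ? ? /andP [? ?]; rewrite inE /=; lia.
  - by move=> t; rewrite !inE /= => ? ?; apply: cS.
have cle : forall t1 t2, (t1 <= t2)%N -> (t2 < m)%N -> (c t1 <= c t2)%N.
  move=> t1 t2; rewrite leq_eqVlt => /orP [/eqP -> //|lt12 t2m].
  by apply/ltnW/cmono => //; rewrite inE; lia.
pose x := (jn i + jn i.+2)%N.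
exists (rcons [seq c t | t <- iota 0 m] x).
split.
- rewrite rcons_uniq; apply/andP; split.
  + apply/mapP => -[t]; rewrite mem_iota /= => tm xc.
    have h1 : (c (i.*2.+1) < x)%N.
      rewrite /c /x.
      have -> : (i.*2.+1 %/ 2 = i)%N by lia.
      have -> : (i.*2.+2 %/ 2 = i.+1)%N by lia.
      by rewrite ltn_add2l; apply: jninc => //.
    have h2 : (x < c (i.*2.+3))%N.
      rewrite /c /x.
      have -> : (i.*2.+3 %/ 2 = i.+1)%N by lia.
      have -> : (i.*2.+4 %/ 2 = i.+2)%N by lia.
      by rewrite ltn_add2r; apply: jninc => //; lia.
    case: (ltnP t i.*2.+2) => t1.
      have := cle t i.*2.+1 ltac:(lia) ltac:(lia); lia.
    case: (ltnP i.*2.+2 t) => t2.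
      have := cle i.*2.+3 t ltac:(lia) ltac:(lia); lia.
    have tt : t = i.*2.+2 by lia.
    move: xc ne; rewrite tt /c /x.
    have -> : (i.*2.+2 %/ 2 = i.+1)%N by lia.
    have -> : (i.*2.+3 %/ 2 = i.+1)%N by lia.
    by move=> ->; rewrite eqxx.
  + rewrite map_inj_in_uniq ?iota_uniq // => t1 t2; rewrite !mem_iota /= => t1m t2m.
    move=> eqc; apply/eqP; apply: contraT => nt.
    case: (ltngtP t1 t2) nt => // h _.
    * by have := cmono t1 t2 ltac:(rewrite inE; lia) ltac:(rewrite inE; lia) h; lia.
    * by have := cmono t2 t1 ltac:(rewrite inE; lia) ltac:(rewrite inE; lia) h; lia.
- by rewrite size_rcons size_map size_iota /m; lia.
- move=> t; rewrite size_rcons size_map size_iota ltnS leq_eqVlt => /orP [/eqP ->|tm].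
    by rewrite nth_rcons size_map size_iota ltnn eqxx; exists (insubd i0 i), (insubd i0 i.+2).
  rewrite nth_rcons size_map size_iota tm (nth_map 0%N) ?size_iota // nth_iota //.
  by exists (insubd i0 (t %/ 2)), (insubd i0 (t.+1 %/ 2)).
Qed.

Lemma sum_lt_aux (x y n : nat) : (7 <= n)%N -> (2 * x <= n - 1)%N -> (2 * y <= n - 1)%N -> (x + y < n)%N.
Proof. lia. Qed.
Lemma fin_aux (k r : nat) : (2 < k)%N -> r = (2 * k)%N -> (r <= (2 * k).-1)%N -> False.
Proof. lia. Qed.

Local Open Scope ring_scope.

Lemma rank_lower (F : fieldType) (n : nat) (w : F) (L : seq nat) :
  n.-primitive_root w -> uniq L -> all (fun s => s < n)%N L ->
  \rank (\matrix_(t < size L, l < n) w ^+ (nth 0%N L t * l)) = size L.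
Proof.
move=> prw uL allL.
set m := size L; set S := \matrix_(t < m, l < n) _.
have mn : (m <= n)%N.
  rewrite -(size_iota 0 n); apply: uniq_leq_size => // x xL.
  by rewrite mem_iota /= (allP allL).
apply/eqP; rewrite eqn_leq rank_leq_row /=.
pose a : 'rV[F]_m := \row_t w ^+ (nth 0%N L t).
have hV : colsub (widen_ord mn) S = (Vandermonde m a)^T.
  apply/matrixP => t i; rewrite !mxE -exprM.
by [].
apply: leq_trans (mxrankM_maxl _ (colsub (widen_ord mn) 1)).
rewrite mulmx_colsub mulmx1 hV mxrank_tr mxrank_unit //.
rewrite unitmxE det_Vandermonde unitfE.
rewrite prodf_seq_neq0; apply/allP => i _ /=.
rewrite prodf_seq_neq0; apply/allP => j _ /=; apply/implyP => ij.
rewrite subr_eq0 !mxE (eq_prim_root_expr prw) !modn_small.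
- apply/negP; rewrite nth_uniq // => /eqP eij.
  by rewrite eij ltnn in ij.
- by apply: (allP allL); apply: mem_nth.
- by apply: (allP allL); apply: mem_nth.
Qed.

Lemma rank_upper (F : fieldType) (n k : nat) (j : 'I_k -> nat) (w : F) (L : seq nat) :
  (forall t, (t < size L)%N -> exists a b : 'I_k, nth 0%N L t = (j a + j b)%N) ->
  RS_type (cycmx n j w) ->
  (\rank (\matrix_(t < size L, l < n) w ^+ (nth 0%N L t * l)) <= (2 * k).-1)%N.
Proof.
move=> hL [x [v [u [sg [_ [_ [_ /andP [hAB _]]]]]]]].
set B := col_perm _ _ *m _ in hAB.
set A := cycmx n j w in hAB.
pose c l := v (sg l) * u l.
pose y l := x (sg l).
have hB : forall a l, B a l = c l * y l ^+ a.
  by move=> a l; rewrite /B mul_mx_diag !mxE /c /y; ring.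
have hA : forall a l, A a l = w ^+ (j a * l) by move=> a l; rewrite mxE.
case/submxP: hAB => M hM.
have hMB : forall a l, (M *m B) a l = \sum_(i < k) M a i * (c l * y l ^+ i).
  by move=> a' l; rewrite mxE; apply: eq_bigr => i _; rewrite hB.
pose T := \matrix_(e < (2 * k).-1, l < n) (c l ^+ 2 * y l ^+ e).
apply: leq_trans (rank_leq_row T).
apply: mxrankS; apply/row_subP => t.
have [a [b hab]] := hL t (ltn_ord t).
have lt : forall a' b' : 'I_k, (a' + b' < (2 * k).-1)%N.
  by move=> [a' ha] [b' hb] /=; rewrite -subn1 ltn_subRL; lia.
have -> : row t (\matrix_(t0 < size L, l < n) w ^+ (nth 0%N L t0 * l)) =
   \sum_(a' < k) \sum_(b' < k) (M a a' * M b b') *: row (Ordinal (lt a' b')) T.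
  apply/rowP => l; rewrite !mxE summxE hab mulnDl exprD -!hA hM !hMB.
  rewrite mulr_suml; apply: eq_bigr => a' _.
  rewrite summxE mulr_sumr; apply: eq_bigr => b' _.
  by rewrite !mxE exprD; ring.
apply: summx_sub => a' _; apply: summx_sub => b' _.
by apply: scalemx_sub; apply: row_sub.
Qed.

Theorem mainTheorem5
  (n k : nat) (j : 'I_k -> nat) (z : algC)
  (p : nat) (F : finFieldType) (w : F) :
  (7 <= n)%N ->
  n.-primitive_root z ->
  (3 <= k)%N ->
  (forall a b : 'I_k, (a < b)%N -> (j a < j b)%N) ->
  (forall a : 'I_k, (2 * j a <= n - 1)%N) ->
  ~ (exists a d : nat, forall i : 'I_k, j i = (a + i * d)%N) ->
  (* all k x k minors of G are non-zero in K *)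
  (forall s : 'I_k -> 'I_n, (forall a b : 'I_k, (a < b)%N -> (s a < s b)%N) ->
     cycminor j z s != 0) ->
  (* p is a prime, p not in P_bad, p does not divide n *)
  prime p ->
  (forall (s : 'I_k -> 'I_n) (m : int),
     (forall a b : 'I_k, (a < b)%N -> (s a < s b)%N) ->
     normminor j z s = m%:~R -> ~~ (p%:Z %| m)%Z) ->
  ~~ (p %| n)%N ->
  (* F = Z[zeta_n]/P for a prime P above p, w = zeta_n mod P *)
  p \in [pchar F] ->
  n.-primitive_root w ->
  (forall y : F, exists q : {poly int}, y = (map_poly intr q).[w]) ->
  ~ RS_type (cycmx n j w).
Proof.
move=> n7 _ k3 jinc jbd nAP _ _ _ _ _ prw _ hRS.
have [L [uL sL memL]] := @comb k j (ltnW (ltnW k3)) jinc nAP.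
have allL : all (fun s => (s < n)%N) L.
  apply/allP => s sL'; have := memL (index s L); rewrite index_mem sL' => /(_ isT).
  by rewrite nth_index // => -[a [b ->]]; apply: sum_lt_aux.
have := @rank_upper _ _ _ _ _ _ memL hRS; rewrite rank_lower //; exact: fin_aux k3 sL.
Qed.
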